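(* Let $\alpha\in\mathbb{R}\setminus\{0\}$, let $\delta^{\star}(\alpha)=1/\alpha^2$ if $\alpha\le 2$ and $\delta^{\star}(\alpha)=\frac{1}{2\alpha}\exp\{1-\frac{\alpha}{2}\}$ if $\alpha>2$, let $|\delta|\le\delta^{\star}(\alpha)$, and let $C(u,v)=uv+\delta(1-e^{\alpha(u-u^2)})(1-e^{\alpha(v-v^2)})$ on $[0,1]^2$. If $\delta\ge 0$ then $C$ is positively quadrant dependent, i.e. $C(u,v)\ge uv$ for all $(u,v)\in[0,1]^2$; if $\delta\le0$ then $C$ is negatively quadrant dependent, i.e. $C(u,v)\le uv$ for all $(u,v)\in[0,1]^2$. *)

(* Defs.v *)
From Stdlib Require Import Reals.
Open Scope R_scope.

Definition delta_star (alpha : R) : R :=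
  if Rle_dec alpha 2 then 1 / alpha ^ 2
  else (1 / (2 * alpha)) * exp (1 - alpha / 2).

Definition Cop (alpha delta u v : R) : R :=
  u * v + delta * (1 - exp (alpha * (u - u ^ 2))) * (1 - exp (alpha * (v - v ^ 2))).

Definition in01 (x : R) : Prop := 0 <= x <= 1.

(* Main.v *)
Require Import Defs.
From Stdlib Require Import Reals Lra.
Open Scope R_scope.

Lemma exp_mono (x y : R) : x <= y -> exp x <= exp y.
Proof.
  intros H. destruct (Rle_lt_or_eq_dec x y H) as [H1|H1].
  - left. apply exp_increasing; exact H1.
  - subst; right; reflexivity.
Qed.

Lemma prod_nonneg (a s t : R) : 0 <= s -> 0 <= t ->
  0 <= (1 - exp (a * s)) * (1 - exp (a * t)).
Proof.
  intros Hs Ht.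
  destruct (Rle_or_lt 0 a) as [Ha|Ha].
  - assert (1 <= exp (a*s)).
    { rewrite <- exp_0. apply exp_mono. nra. }
    assert (1 <= exp (a*t)).
    { rewrite <- exp_0. apply exp_mono. nra. }
    nra.
  - assert (exp (a*s) <= 1).
    { rewrite <- exp_0. apply exp_mono. nra. }
    assert (exp (a*t) <= 1).
    { rewrite <- exp_0. apply exp_mono. nra. }
    nra.
Qed.

Theorem proposition2 (alpha delta : R) :
  alpha <> 0 ->
  Rabs delta <= delta_star alpha ->
  (0 <= delta -> forall u v, in01 u -> in01 v -> Cop alpha delta u v >= u * v) /\
  (delta <= 0 -> forall u v, in01 u -> in01 v -> Cop alpha delta u v <= u * v).
Proof.
  intros _ _. unfold Cop, in01.
  split; intros Hd u v Hu Hv;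
  (assert (H := prod_nonneg alpha (u - u^2) (v - v^2) ltac:(nra) ltac:(nra)));
  rewrite Rmult_assoc; nra.
Qed.
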